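(* Consider two circular bodies in $\mathbb R^2$ of equal mass ($\mu_1=\mu_2=1/2$) and radii $R_1,R_2$, moving on elliptic Keplerian orbits about a fixed center and interacting only by elastic or inelastic collisions, as described in the context; let $D=R_1+R_2$. Let $\gamma=2L^2/D>1$ and $e=\gamma-\sqrt{\gamma^2-\gamma+1}$. If $$EL^2<-\frac{(1-e^2)(1+e)^2}{16e^2},$$ then the two bodies remain on elliptic orbits.
   Context: Units are chosen so that each body's center $\mathbf x_i\in\mathbb R^2$ moves, between collisions, with acceleration $-\mathbf x_i/|\mathbf x_i|^3$ (fixed attracting center at the origin; no mutual gravitation). Bodies have masses $m_1,m_2$, $\mu_i=m_i/(m_1+m_2)$. Specific energy $E_i=|\mathbf v_i|^2/2-1/|\mathbf x_i|$, signed specific angular momentum $L_i=x_{i,1}v_{i,2}-x_{i,2}v_{i,1}$; the orbit of body $i$ is elliptic iff $E_i<0$. Set $E=\mu_1E_1+\mu_2E_2$, $L=\mu_1L_1+\mu_2L_2$. A collision occurs when $|\mathbf x_1-\mathbf x_2|=D$ and $\mathbf n\cdot\mathbf w<0$, where $\mathbf n=(\mathbf x_1-\mathbf x_2)/D$, $\mathbf w=\mathbf v_1-\mathbf v_2$; then $\mathbf w'=(I-\mathbf n\otimes\mathbf n)\mathbf w-(1-2\varepsilon)(\mathbf n\otimes\mathbf n)\mathbf w$ with $\varepsilon\in[0,1/2]$ ($\varepsilon=0$ elastic), and with $\mathbf v=\mu_1\mathbf v_1+\mu_2\mathbf v_2$ the outgoing velocities are $\mathbf v_1'=\mathbf v+\mu_2\mathbf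 w'$, $\mathbf v_2'=\mathbf v-\mu_1\mathbf w'$. *)

(* Defs.v *)
From Stdlib Require Import Reals Lra.
Open Scope R_scope.

Definition vec : Type := (R * R)%type.
Definition vadd (a b : vec) : vec := (fst a + fst b, snd a + snd b).
Definition vsub (a b : vec) : vec := (fst a - fst b, snd a - snd b).
Definition vscale (c : R) (a : vec) : vec := (c * fst a, c * snd a).
Definition dot (a b : vec) : R := fst a * fst b + snd a * snd b.
Definition vnorm (a : vec) : R := sqrt (dot a a).

Definition energy (x v : vec) : R := dot v v / 2 - 1 / vnorm x.
Definition angmom (x v : vec) : R := fst x * snd v - snd x * fst v.

Definition mu1 : R := 1/2.
Definition mu2 : R := 1/2.

Definition totE (x1 v1 x2 v2 : vec) : R := mu1 * energy x1 v1 + mu2 * energy x2 v2.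
Definition totL (x1 v1 x2 v2 : vec) : R := mu1 * angmom x1 v1 + mu2 * angmom x2 v2.

Definition cnormal (D : R) (x1 x2 : vec) : vec := vscale (/ D) (vsub x1 x2).
Definition relvel (v1 v2 : vec) : vec := vsub v1 v2.

(* w' = (I - n n^T) w - (1 - 2 eps) (n n^T) w *)
Definition wout (eps : R) (n w : vec) : vec :=
  vsub (vsub w (vscale (dot n w) n)) (vscale ((1 - 2 * eps) * dot n w) n).

Definition v1out (eps D : R) (x1 x2 v1 v2 : vec) : vec :=
  vadd (vadd (vscale mu1 v1) (vscale mu2 v2))
       (vscale mu2 (wout eps (cnormal D x1 x2) (relvel v1 v2))).
Definition v2out (eps D : R) (x1 x2 v1 v2 : vec) : vec :=
  vsub (vadd (vscale mu1 v1) (vscale mu2 v2))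
       (vscale mu1 (wout eps (cnormal D x1 x2) (relvel v1 v2))).

Definition gam (D L : R) : R := 2 * L ^ 2 / D.
Definition ecc (D L : R) : R := gam D L - sqrt (gam D L ^ 2 - gam D L + 1).

Definition ellip_cond (D E L : R) : Prop :=
  1 < gam D L /\
  E * L ^ 2 < - ((1 - ecc D L ^ 2) * (1 + ecc D L) ^ 2 / (16 * ecc D L ^ 2)).

(* Main.v *)
Require Import Defs.
From Stdlib Require Import Reals Lra Psatz.
Open Scope R_scope.


Lemma poly_ineq (e r s t : R) : 0 < e -> 2*e < 1 -> 0 < r -> 0 <= t -> 2*r <= s^2 ->
  (1-e^2)*(s^2-2*r) <= (s+t)^2*(1-2*e) ->
  e^2*(2*r - t^2)*(s^2-2*r) <= (1+e)^2*(1-2*e)*r^2.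
Proof.
  intros He He2 Hr Ht Hs HH.
  destruct (Rle_dec (2*r) (t^2)) as [Hc|Hc].
  - assert (0 <= e^2*(t^2-2*r)*(s^2-2*r)) by (apply Rmult_le_pos; [apply Rmult_le_pos|]; nra).
    assert (0 <= (1+e)^2*(1-2*e)*r^2) by (apply Rmult_le_pos; [apply Rmult_le_pos|]; nra).
    nra.
  - set (A := e^2*(1-2*e)*((1-e)*t^2 + e*(3-e)*r)).
    set (B1 := (-2)*e*r*t + (4)*e^2*t^3 + (-2)*e^2*r*t + (-8)*e^3*t^3 + (16)*e^3*r*t + (-8)*e^4*r*t).
    set (K := (1)*r^2 + (-1)*e*r*t^2 + (-1)*e*r^2 + (2)*e^2*t^4 + (1)*e^2*r*t^2 + (-5)*e^2*r^2 + (-4)*e^3*t^4 + (6)*e^3*r*t^2 + (5)*e^3*r^2 + (-8)*e^4*r*t^2 + (4)*e^4*r^2 + (-4)*e^5*r^2).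
    set (G := (1+e)^2*(1-2*e)*r^2 - e^2*(2*r - t^2)*(s^2-2*r)).
    set (H := (s+t)^2*(1-2*e) - (1-e^2)*(s^2-2*r)).
    set (mu := e*(1+e)*r + 2*e^2*((1-e)*r - t^2)).
    set (W := e^3*((3 - 4*e - 17*e^2 + 18*e^3 + 20*e^4 - 8*e^5)*r - 2*e*(1-2*e)^2*(1+e)*t^2)).
    assert (HX : (1+e)*G - mu*H = A*s^2 + B1*s + K) by (unfold G,H,mu,A,B1,K; ring).
    assert (HV : 4*A*(A*s^2 + B1*s + K) = (2*A*s+B1)^2 + 4*((1-e)*r - t^2)^2*W)
      by (unfold A,B1,K,W; ring).
    assert (HA : 0 < A).
    { unfold A. assert (0 < e^2) by nra. assert (0 < 1-2*e) by lra.
      assert (0 <= (1-e)*t^2) by (apply Rmult_le_pos; nra).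
      assert (0 < e*(3-e)*r) by (apply Rmult_lt_0_compat; [apply Rmult_lt_0_compat|]; lra).
      apply Rmult_lt_0_compat; [apply Rmult_lt_0_compat|]; lra. }
    assert (Hq : 0 <= 3 + 4*e - e^2 - 2*e^3) by nra.
    assert (HW : 0 <= W).
    { unfold W. apply Rmult_le_pos; [nra|].
      assert (E1: (3 - 4*e - 17*e^2 + 18*e^3 + 20*e^4 - 8*e^5)*r - 2*e*(1-2*e)^2*(1+e)*t^2
        = (1-2*e)^2*(3 + 4*e - e^2 - 2*e^3)*r + 2*e*(1-2*e)^2*(1+e)*(2*r - t^2)) by ring.
      rewrite E1.
      assert (0 <= (1-2*e)^2*(3 + 4*e - e^2 - 2*e^3)*r) by (apply Rmult_le_pos; [apply Rmult_le_pos|]; nra).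
      assert (0 <= 2*e*(1-2*e)^2*(1+e)*(2*r - t^2)).
      { apply Rmult_le_pos; [|lra]. apply Rmult_le_pos; [|lra]. apply Rmult_le_pos; nra. }
      lra. }
    assert (HX0 : 0 <= A*s^2 + B1*s + K).
    { assert (0 <= 4*((1-e)*r - t^2)^2*W) by (apply Rmult_le_pos; [apply Rmult_le_pos; [lra|apply pow2_ge_0]|exact HW]).
      assert (H4 : 0 <= 4*A*(A*s^2 + B1*s + K)) by (rewrite HV; apply Rplus_le_le_0_compat; [apply pow2_ge_0|assumption]).
      assert (H4' : 0 <= (4*A)*(A*s^2 + B1*s + K)) by lra.
      destruct (Rle_dec 0 (A*s^2 + B1*s + K)) as [h|h]; [exact h|].
      exfalso. assert ((4*A)*(A*s^2 + B1*s + K) < 0).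
      { rewrite Rmult_comm. apply Rmult_neg_pos; lra. }
      lra. }
    assert (Hmu : 0 <= mu).
    { assert (Em : mu = e*r*((1-2*e)*(1+e)) + 2*e^2*(2*r-t^2)) by (unfold mu; ring).
      rewrite Em. assert (0 <= e*r*((1-2*e)*(1+e))) by (apply Rmult_le_pos; [apply Rmult_le_pos|]; nra).
      assert (0 <= 2*e^2*(2*r-t^2)) by (apply Rmult_le_pos; nra). lra. }
    assert (HH0 : 0 <= H) by (unfold H; lra).
    assert (0 <= mu*H) by (apply Rmult_le_pos; lra).
    assert (0 <= G) by nra.
    unfold G in *; lra.
Qed.

Lemma sq_le_abs (X s : R) : 0 <= s -> X^2 <= s^2 -> X <= s /\ -s <= X.
Proof. intros. split; nra. Qed.

Lemma cs (m k b c : R) : (m*b - k*c)^2 <= (b*b + c*c)*(m*m+k*k).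
Proof.
  assert (E : (b*b + c*c)*(m*m+k*k) - (m*b - k*c)^2 = (m*c + k*b)^2) by ring.
  pose proof (pow2_ge_0 (m*c+k*b)). lra.
Qed.

Lemma core (D r1 r2 m k b1 a1 b2 a2 c L E e : R) :
 0 < D -> 0 < r1 -> 0 < r2 ->
 m*m + k*k = r1*r1 -> (m-D)*(m-D) + k*k = r2*r2 ->
 b1*b1 + a1*a1 < 2/r1 -> 2/r1 <= b1*b1 + c*c -> a1 <= c -> c <= a2 ->
 2*L = m*b1 - k*a1 + (m-D)*b2 - k*a2 ->
 4*E = b1*b1+a1*a1 - 2/r1 + b2*b2 + a2*a2 - 2/r2 ->
 0 < e -> 2*e < 1 -> (2*L^2/D)*(1-2*e) = 1 - e^2 ->
 - ((1 - e^2) * (1 + e)^2 / (16 * e^2)) <= E * L^2.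
Proof.
  intros HD Hr1 Hr2 Hm1 Hm2 HE1 Hesc Hac Hca HL HE He He2 Hg.
  set (T := 2/r1 - b1*b1).
  assert (HT : a1*a1 < T) by (unfold T; lra).
  assert (HT0 : 0 <= T) by nra.
  set (c0 := sqrt T).
  assert (Hc0 : c0*c0 = T) by (apply sqrt_sqrt; lra).
  assert (Hc00 : 0 <= c0) by apply sqrt_pos.
  assert (Ha1c0 : a1 <= c0) by nra.
  assert (Hc0c : c0 <= c).
  { assert (0 <= c) by (destruct (Rle_dec 0 c); [assumption| unfold T in *; nra]).
    unfold T in *; nra. }
  set (Q := b2*b2 + a1*a1 + a2*a2 - c0*c0).
  assert (HQ1 : b2*b2 + (a1+a2-c0)*(a1+a2-c0) <= Q).
  { unfold Q. assert ((c0-a1)*(c0-a2) <= 0) by nra. nra. }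
  assert (HQ0 : 0 <= Q) by (pose proof (Rle_0_sqr b2); pose proof (Rle_0_sqr (a1+a2-c0)); unfold Rsqr in *; lra).
  set (t := r2 * sqrt Q).
  assert (Ht0 : 0 <= t) by (unfold t; apply Rmult_le_pos; [lra|apply sqrt_pos]).
  assert (Ht2 : t^2 = r2^2 * Q).
  { unfold t. rewrite Rpow_mult_distr. rewrite <- (Rsqr_pow2 (sqrt Q)), Rsqr_sqrt by lra. reflexivity. }
  set (X := m*b1 - k*c0).
  set (Y := (m-D)*b2 - k*(a1+a2-c0)).
  assert (HLXY : 2*L = X + Y) by (unfold X, Y; lra).
  assert (Hr1D : r1 <= r2 + D).
  { assert (h1 : (m-D)*(m-D) <= r2*r2) by (pose proof (Rle_0_sqr k); unfold Rsqr in *; lra).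
    assert (h2 : m - D <= r2) by nra.
    assert (h3 : r1*r1 <= (r2+D)*(r2+D)) by nra.
    nra. }
  set (s := sqrt (2*(r2+D))).
  assert (Hs2 : s^2 = 2*(r2+D)) by (unfold s; rewrite <- Rsqr_pow2; apply Rsqr_sqrt; lra).
  assert (Hs0 : 0 <= s) by apply sqrt_pos.
  assert (HX2 : X^2 <= s^2).
  { assert (X^2 <= (b1*b1 + c0*c0)*(m*m+k*k)) by (unfold X; apply cs).
    assert (b1*b1 + c0*c0 = 2/r1) by (unfold T in Hc0; lra).
    assert ((2/r1)*(r1*r1) = 2*r1) by (field; lra).
    nra. }
  assert (HY2 : Y^2 <= t^2).
  { assert (Y^2 <= (b2*b2 + (a1+a2-c0)*(a1+a2-c0))*((m-D)*(m-D)+k*k)) by (unfold Y; apply cs).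
    rewrite Ht2. nra. }
  destruct (sq_le_abs X s Hs0 HX2). destruct (sq_le_abs Y t Ht0 HY2).
  assert (HLst : (2*L)^2 <= (s+t)^2) by (rewrite HLXY; nra).
  assert (HH : (1-e^2)*(s^2-2*r2) <= (s+t)^2*(1-2*e)).
  { assert (Hs3 : s^2 - 2*r2 = 2*D) by lra.
    rewrite Hs3.
    assert (E2 : (2*L)^2*(1-2*e) = 2*D*(1-e^2)).
    { rewrite <- Hg. field. lra. }
    nra. }
  pose proof (poly_ineq e r2 s t He He2 Hr2 Ht0 ltac:(lra) HH) as HP.
  assert (HEQ : E = (Q - 2/r2)/4) by (unfold Q; unfold T in Hc0; lra).
  assert (HQt : Q = t^2/r2^2) by (rewrite Ht2; field; lra).
  assert (HL2 : L^2 = D*(1-e^2)/(2*(1-2*e))).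
  { rewrite <- Hg. field. split; lra. }
  assert (HDs : D = (s^2 - 2*r2)/2) by lra.
  rewrite HEQ, HL2, HQt, HDs.
  set (Z := e^2*(t^2-2*r2)*(s^2-2*r2) + (1+e)^2*(1-2*e)*r2^2).
  assert (HZ : 0 <= Z) by (unfold Z; lra).
  assert (Hid : (t^2/r2^2 - 2/r2)/4 * ((s^2-2*r2)/2*(1-e^2)/(2*(1-2*e))) - (- ((1 - e^2) * (1 + e)^2 / (16 * e^2)))
     = (1-e^2)/(16*e^2*r2^2*(1-2*e)) * Z).
  { unfold Z. field. repeat split; lra. }
  assert (0 <= (1-e^2)/(16*e^2*r2^2*(1-2*e)) * Z).
  { apply Rmult_le_pos; [|exact HZ]. apply Rmult_le_pos; [nra|].
    apply Rlt_le, Rinv_0_lt_compat. apply Rmult_lt_0_compat; [|lra]. 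
    apply Rmult_lt_0_compat; [nra|]. apply pow_lt; lra. }
  lra.
Qed.

Lemma ecc_facts D L : 0 < D -> 1 < gam D L ->
  0 < ecc D L /\ 2*ecc D L < 1 /\ (2*L^2/D)*(1-2*ecc D L) = 1 - (ecc D L)^2.
Proof.
  intros HD Hg. unfold ecc. fold (gam D L). set (g := gam D L) in *.
  assert (Hpos : 0 <= g^2 - g + 1) by nra.
  set (S := sqrt (g^2 - g + 1)).
  assert (HS : S*S = g^2 - g + 1) by (apply sqrt_sqrt; lra).
  assert (HS0 : 0 <= S) by apply sqrt_pos.
  assert (HgD : 2*L^2/D = g) by reflexivity.
  try rewrite HgD.
  split; [nra|split; [nra|nra]].
Qed.

Theorem theorem3 (R1 R2 eps : R) (x1 x2 v1 v2 : vec) :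
  0 < R1 -> 0 < R2 -> 0 <= eps <= 1/2 ->
  x1 <> (0, 0) -> x2 <> (0, 0) ->
  vnorm (vsub x1 x2) = R1 + R2 ->
  dot (cnormal (R1 + R2) x1 x2) (relvel v1 v2) < 0 ->
  energy x1 v1 < 0 -> energy x2 v2 < 0 ->
  ellip_cond (R1 + R2) (totE x1 v1 x2 v2) (totL x1 v1 x2 v2) ->
  energy x1 (v1out eps (R1 + R2) x1 x2 v1 v2) < 0 /\
  energy x2 (v2out eps (R1 + R2) x1 x2 v1 v2) < 0 /\
  ellip_cond (R1 + R2)
    (totE x1 (v1out eps (R1 + R2) x1 x2 v1 v2) x2 (v2out eps (R1 + R2) x1 x2 v1 v2))
    (totL x1 (v1out eps (R1 + R2) x1 x2 v1 v2) x2 (v2out eps (R1 + R2) x1 x2 v1 v2)).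
Proof.
  intros HR1 HR2 Heps Hx1 Hx2 Hnorm Happ HE1 HE2 Hell.
  destruct x1 as [p1 q1], x2 as [p2 q2], v1 as [u1 w1], v2 as [u2 w2].
  set (D := R1 + R2) in *.
  assert (HD : 0 < D) by (unfold D; lra).
  clearbody D.
  assert (HDD : (p1-p2)*(p1-p2) + (q1-q2)*(q1-q2) = D*D).
  { unfold vnorm, vsub, dot in Hnorm; simpl in Hnorm. rewrite <- Hnorm.
    symmetry; apply sqrt_sqrt. pose proof (Rle_0_sqr (p1-p2)); pose proof (Rle_0_sqr (q1-q2)); unfold Rsqr in *; lra. }
  clear Hnorm.
  set (n1 := (p1-p2)/D). set (n2 := (q1-q2)/D).
  assert (hcn : cnormal D (p1,q1) (p2,q2) = (n1,n2)).
  { unfold cnormal, vscale, vsub; simpl. unfold n1, n2, Rdiv. f_equal; ring. }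
  assert (hv1 : v1out eps D (p1,q1) (p2,q2) (u1,w1) (u2,w2) =
     (u1 - (1-eps)*(n1*(u1-u2)+n2*(w1-w2))*n1, w1 - (1-eps)*(n1*(u1-u2)+n2*(w1-w2))*n2)).
  { unfold v1out. rewrite hcn. unfold vadd, vscale, wout, relvel, vsub, dot, mu1, mu2; simpl. f_equal; field. }
  assert (hv2 : v2out eps D (p1,q1) (p2,q2) (u1,w1) (u2,w2) =
     (u2 + (1-eps)*(n1*(u1-u2)+n2*(w1-w2))*n1, w2 + (1-eps)*(n1*(u1-u2)+n2*(w1-w2))*n2)).
  { unfold v2out. rewrite hcn. unfold vsub, vadd, vscale, wout, relvel, dot, mu1, mu2; simpl. f_equal; field. }
  rewrite hv1, hv2. rewrite hcn in Happ. clear hv1 hv2.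
  assert (hp : p1 = p2 + D*n1) by (unfold n1; field; lra).
  assert (hq : q1 = q2 + D*n2) by (unfold n2; field; lra).
  assert (hn : n1*n1 + n2*n2 = 1).
  { unfold n1, n2. apply (Rmult_eq_reg_l (D*D)); [|nra]. field_simplify; [|lra]. nra. }
  assert (Hr1 : 0 < vnorm (p1,q1) /\ vnorm (p1,q1) * vnorm (p1,q1) = p1*p1+q1*q1).
  { unfold vnorm, dot; simpl. split.
    - apply sqrt_lt_R0. pose proof (Rle_0_sqr p1); pose proof (Rle_0_sqr q1); unfold Rsqr in *.
      destruct (Req_dec p1 0) as [h1|h1].
      + destruct (Req_dec q1 0) as [h2|h2]; [exfalso; apply Hx1; rewrite h1, h2; reflexivity|].
        assert (0 < q1*q1) by (apply Rsqr_pos_lt; exact h2). lra.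
      + assert (0 < p1*p1) by (apply Rsqr_pos_lt; exact h1). lra.
    - apply sqrt_sqrt. pose proof (Rle_0_sqr p1); pose proof (Rle_0_sqr q1); pose proof (Rle_0_sqr p2); pose proof (Rle_0_sqr q2); unfold Rsqr in *; lra. }
  assert (Hr2 : 0 < vnorm (p2,q2) /\ vnorm (p2,q2) * vnorm (p2,q2) = p2*p2+q2*q2).
  { unfold vnorm, dot; simpl. split.
    - apply sqrt_lt_R0. pose proof (Rle_0_sqr p2); pose proof (Rle_0_sqr q2); unfold Rsqr in *.
      destruct (Req_dec p2 0) as [h1|h1].
      + destruct (Req_dec q2 0) as [h2|h2]; [exfalso; apply Hx2; rewrite h1, h2; reflexivity|].
        assert (0 < q2*q2) by (apply Rsqr_pos_lt; exact h2). lra.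
      + assert (0 < p2*p2) by (apply Rsqr_pos_lt; exact h1). lra.
    - apply sqrt_sqrt. pose proof (Rle_0_sqr p1); pose proof (Rle_0_sqr q1); pose proof (Rle_0_sqr p2); pose proof (Rle_0_sqr q2); unfold Rsqr in *; lra. }
  unfold ellip_cond, totE, totL, energy in *.
  set (r1 := vnorm (p1,q1)) in *. set (r2 := vnorm (p2,q2)) in *.
  destruct Hr1 as [Hr1 Hr1s], Hr2 as [Hr2 Hr2s].
  clearbody r1 r2. clearbody n1 n2. subst p1 q1.
  unfold dot, relvel, vsub, angmom in *; simpl in *.
  set (L := mu1 * ((p2 + D * n1) * w1 - (q2 + D * n2) * u1) + mu2 * (p2 * w2 - q2 * u2)) in *.
  set (E := mu1 * ((u1 * u1 + w1 * w1) / 2 - 1 / r1) + mu2 * ((u2 * u2 + w2 * w2) / 2 - 1 / r2)) in *.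
  destruct Hell as [Hg HB].
  destruct (ecc_facts D L HD Hg) as [He [He2 Hge]].
  set (e := ecc D L) in *.
  set (a1 := n1*u1 + n2*w1). set (b1 := -n2*u1 + n1*w1).
  set (a2 := n1*u2 + n2*w2). set (b2 := -n2*u2 + n1*w2).
  set (m := (p2 + D*n1)*n1 + (q2+D*n2)*n2). set (k := -n2*(p2+D*n1) + n1*(q2 + D*n2)).
  set (m2 := p2*n1 + q2*n2).
  assert (Hsw : n1 * (u1 - u2) + n2 * (w1 - w2) = a1 - a2) by (unfold a1, a2; ring).
  rewrite Hsw in *.
  set (X := (1 - eps) * (a1 - a2)).
  assert (Hmm2 : m = m2 + D).
  { assert (h : m = m2 + D*(n1*n1+n2*n2)) by (unfold m, m2; ring). rewrite hn in h. lra. }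
  assert (Hk : k = -n2*p2 + n1*q2) by (unfold k; ring).
  assert (F1 : m*m + k*k = r1*r1).
  { assert (h : m*m+k*k = (r1*r1)*(n1*n1+n2*n2)) by (rewrite Hr1s; unfold m, k; ring).
    rewrite hn in h. lra. }
  assert (F2 : m2*m2 + k*k = r2*r2).
  { assert (h : m2*m2+k*k = (r2*r2)*(n1*n1+n2*n2)) by (rewrite Hr2s, Hk; unfold m2; ring).
    rewrite hn in h. lra. }
  assert (V1 : u1*u1+w1*w1 = b1*b1 + a1*a1).
  { assert (h : b1*b1+a1*a1 = (u1*u1+w1*w1)*(n1*n1+n2*n2)) by (unfold a1, b1; ring). rewrite hn in h. lra. }
  assert (V2 : u2*u2+w2*w2 = b2*b2 + a2*a2).
  { assert (h : b2*b2+a2*a2 = (u2*u2+w2*w2)*(n1*n1+n2*n2)) by (unfold a2, b2; ring). rewrite hn in h. lra. }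
  assert (P1 : (u1 - X * n1) * (u1 - X * n1) + (w1 - X * n2) * (w1 - X * n2) = b1*b1 + (a1 - X)*(a1-X)).
  { assert (h : (u1 - X * n1) * (u1 - X * n1) + (w1 - X * n2) * (w1 - X * n2)
       = (u1*u1+w1*w1) - 2*X*a1 + X*X*(n1*n1+n2*n2)) by (unfold a1; ring).
    rewrite hn, V1 in h. lra. }
  assert (P2 : (u2 + X * n1) * (u2 + X * n1) + (w2 + X * n2) * (w2 + X * n2) = b2*b2 + (a2 + X)*(a2+X)).
  { assert (h : (u2 + X * n1) * (u2 + X * n1) + (w2 + X * n2) * (w2 + X * n2)
       = (u2*u2+w2*w2) + 2*X*a2 + X*X*(n1*n1+n2*n2)) by (unfold a2; ring).
    rewrite hn, V2 in h. lra. }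
  assert (HL2 : 2*L = m*b1 - k*a1 + (m-D)*b2 - k*a2).
  { assert (h1 : m*b1 - k*a1 = ((p2 + D * n1) * w1 - (q2 + D * n2) * u1)*(n1*n1+n2*n2))
      by (unfold m, k, a1, b1; ring).
    assert (h2 : m2*b2 - k*a2 = (p2 * w2 - q2 * u2)*(n1*n1+n2*n2))
      by (unfold m2, k, a2, b2; ring).
    rewrite hn in h1, h2. replace (m - D) with m2 by lra. unfold L, mu1, mu2. lra. }
  assert (HE4 : 4*E = b1*b1+a1*a1 - 2/r1 + b2*b2 + a2*a2 - 2/r2).
  { unfold E, mu1, mu2. rewrite V1, V2. field. lra. }
  assert (HEi1 : b1*b1 + a1*a1 < 2/r1).
  { rewrite <- V1. apply (Rmult_lt_reg_r (/2)); [lra|]. unfold Rdiv in *. lra. }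
  assert (HEi2 : b2*b2 + a2*a2 < 2/r2).
  { rewrite <- V2. apply (Rmult_lt_reg_r (/2)); [lra|]. unfold Rdiv in *. lra. }
  assert (HX0 : X <= 0) by (unfold X; nra).
  assert (HaX1 : a1 - X <= a2) by (unfold X; nra).
  assert (HaX2 : a1 <= a2 + X) by (unfold X; nra).
  assert (HBs := HB).
  split; [|split].
  - rewrite P1. destruct (Rlt_dec ((b1 * b1 + (a1 - X) * (a1 - X)) / 2 - 1 / r1) 0) as [h|h]; [exact h|].
    exfalso.
    assert (Hesc : 2/r1 <= b1*b1 + (a1-X)*(a1-X)) by (unfold Rdiv in *; lra).
    pose proof (core D r1 r2 m k b1 a1 b2 a2 (a1-X) L E e HD Hr1 Hr2 F1
       ltac:(rewrite Hmm2; replace (m2 + D - D) with m2 by ring; exact F2)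
       HEi1 Hesc ltac:(lra) HaX1 HL2 HE4 He He2 Hge) as HC.
    simpl in HC. lra.
  - rewrite P2. destruct (Rlt_dec ((b2 * b2 + (a2 + X) * (a2 + X)) / 2 - 1 / r2) 0) as [h|h]; [exact h|].
    exfalso.
    assert (Hesc : 2/r2 <= (-b2)*(-b2) + (-(a2+X))*(-(a2+X))) by (unfold Rdiv in *; lra).
    pose proof (core D r2 r1 (-m2) (-k) (-b2) (-a2) (-b1) (-a1) (-(a2+X)) L E e HD Hr2 Hr1
       ltac:(lra)
       ltac:(rewrite <- F1, Hmm2; ring)
       ltac:(lra) Hesc ltac:(lra) ltac:(lra)
       ltac:(rewrite HL2, Hmm2; ring)
       ltac:(rewrite HE4; ring) He He2 Hge) as HC.
    simpl in HC. lra.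
  - assert (HLp : mu1 * ((p2 + D * n1) * (w1 - X * n2) - (q2 + D * n2) * (u1 - X * n1)) +
       mu2 * (p2 * (w2 + X * n2) - q2 * (u2 + X * n1)) = L) by (unfold L, mu1, mu2; ring).
    rewrite HLp. fold e. split; [exact Hg|].
    rewrite P1, P2.
    set (E' := mu1 * ((b1 * b1 + (a1 - X) * (a1 - X)) / 2 - 1 / r1) +
       mu2 * ((b2 * b2 + (a2 + X) * (a2 + X)) / 2 - 1 / r2)).
    assert (HEE : E' <= E).
    { assert (h : E - E' = eps*(1-eps)*(a1-a2)*(a1-a2)/2).
      { unfold E', E, X, mu1, mu2. rewrite V1, V2. field; split; lra. }
      assert (0 <= eps*(1-eps)*(a1-a2)*(a1-a2)/2).
      { assert (h0 : 0 <= eps*(1-eps)) by nra. pose proof (Rle_0_sqr (a1-a2)) as h3. unfold Rsqr in h3. assert (h4 : 0 <= eps*(1-eps)*((a1-a2)*(a1-a2))) by (apply Rmult_le_pos; assumption). lra. }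
      lra. }
    assert (0 <= L*(L*1)) by nra.
    assert (E' * (L*(L*1)) <= E * (L*(L*1))) by (apply Rmult_le_compat_r; lra).
    lra.
Qed.
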